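(* Let $D$ be an integral domain. Then, the closure of the set of semilocal Pr\''ufer overrings of $D$ in the constructible topology of the space of all overrings of $D$ is the set of integrally closed overrings of $D$.
   Context: Let $D$ be an integral domain with quotient field $K$. The set of all overrings of $D$ (rings $R$ with $D\subseteq R\subseteq K$) carries the Zariski topology, whose basic open sets are $\{R \mid F\subseteq R\}$ for $F$ ranging among finite subsets of $K$; it is a spectral space. The constructible topology on a spectral space is the coarsest topology for which all open and quasi-compact subsets are clopen. *)

(* Defs.v *)
From HB Require Import structures.
From mathcomp Require Import all_boot all_order all_algebra.
Set Implicit Arguments. Unset Strict Implicit. Unset Printing Implicit Defensive.
Import Order.TTheory GRing.Theory Num.Theory.
Local Open Scope ring_scope.

Section Defs.
Variable K : fieldType.

Definition subring (A : K -> Prop) : Prop :=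
  A 1 /\ (forall x y, A x -> A y -> A (x - y)) /\ (forall x y, A x -> A y -> A (x * y)).

Definition quotient_field_of (D : K -> Prop) : Prop :=
  forall x : K, exists a b : K, D a /\ D b /\ b != 0 /\ x = a / b.

Definition overring (D R : K -> Prop) : Prop :=
  subring R /\ (forall x, D x -> R x).

(* Basic Zariski open sets { R overring | F ⊆ R }, F a finite subset of K. *)
Definition zbasic (D : K -> Prop) (F : seq K) (R : K -> Prop) : Prop :=
  overring D R /\ (forall x, x \in F -> R x).

Definition zopen (D : K -> Prop) (U : (K -> Prop) -> Prop) : Prop :=
  (forall R, U R -> overring D R) /\
  (forall R, U R -> exists F : seq K, zbasic D F R /\ (forall R', zbasic D F R' -> U R')).

Definition zquasicompact (D : K -> Prop) (U : (K -> Prop) -> Prop) : Prop :=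
  forall (I : Type) (V : I -> (K -> Prop) -> Prop),
    (forall i, zopen D (V i)) -> (forall R, U R -> exists i, V i R) ->
    exists (n : nat) (f : nat -> I), forall R, U R -> exists k, (k < n)%N /\ V (f k) R.

(* Closure of S in the constructible topology, i.e. the topology generated by
   the open quasi-compact sets and their complements (in the space of overrings):
   R lies in the closure iff every finite intersection of such sets containing R
   meets S. *)
Definition constructible_closure (D : K -> Prop) (S : (K -> Prop) -> Prop)
    (R : K -> Prop) : Prop :=
  overring D R /\
  forall (n : nat) (U : nat -> (K -> Prop) -> Prop) (b : nat -> bool),
    (forall k, (k < n)%N -> zopen D (U k) /\ zquasicompact D (U k)) ->
    (forall k, (k < n)%N -> (U k R <-> b k = true)) ->
    exists R', overring D R' /\ S R' /\
      (forall k, (k < n)%N -> (U k R' <-> b k = true)).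

Definition ideal (R I : K -> Prop) : Prop :=
  (forall x, I x -> R x) /\ I 0 /\ (forall x y, I x -> I y -> I (x + y)) /\
  (forall r x, R r -> I x -> I (r * x)).

Definition finitely_generated (R I : K -> Prop) : Prop :=
  exists xs : seq K, (forall x, x \in xs -> R x) /\
    forall y, I y <-> exists cs : seq K, size cs = size xs /\
       (forall c, c \in cs -> R c) /\ y = \sum_(i < size xs) cs`_i * xs`_i.

Definition colon (R I : K -> Prop) : K -> Prop := fun x => forall y, I y -> R (x * y).

Definition set_prod (I J : K -> Prop) : K -> Prop := fun z =>
  exists (n : nat) (a b : nat -> K), (forall i, (i < n)%N -> I (a i) /\ J (b i)) /\
    z = \sum_(i < n) a i * b i.

Definition invertible_ideal (R I : K -> Prop) : Prop :=
  forall z, set_prod I (colon R I) z <-> R z.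

Definition prufer (R : K -> Prop) : Prop :=
  forall I, ideal R I -> finitely_generated R I -> (exists x, I x /\ x != 0) ->
    invertible_ideal R I.

Definition maximal_ideal (R M : K -> Prop) : Prop :=
  ideal R M /\ (exists x, R x /\ ~ M x) /\
  forall J, ideal R J -> (forall x, M x -> J x) ->
    (forall x, J x <-> M x) \/ (forall x, J x <-> R x).

Definition semilocal (R : K -> Prop) : Prop :=
  exists (n : nat) (M : nat -> K -> Prop), forall N, maximal_ideal R N ->
    exists k, (k < n)%N /\ forall x, N x <-> M k x.

(* Integrally closed (in K, the quotient field of every overring). *)
Definition integral_over (R : K -> Prop) (x : K) : Prop :=
  exists p : {poly K}, p \is monic /\ (forall i, R p`_i) /\ root p x.

Definition integrally_closed (R : K -> Prop) : Prop :=
  forall x, integral_over R x -> R x.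

End Defs.

(* Main.v *)
Require Import Defs.
From HB Require Import structures.
From mathcomp Require Import all_boot all_order all_algebra.
From mathcomp Require Import ring zify.
From mathcomp Require classical_sets.
From Stdlib Require Import Classical ClassicalEpsilon FunctionalExtensionality PropExtensionality.
Set Implicit Arguments. Unset Strict Implicit. Unset Printing Implicit Defensive.
Import Order.TTheory GRing.Theory Num.Theory.
Local Open Scope ring_scope.

Lemma sr1 (K : fieldType) (A : K -> Prop) : subring A -> A 1.
Proof. by case. Qed.
Lemma srB (K : fieldType) (A : K -> Prop) x y : subring A -> A x -> A y -> A (x - y).
Proof. by case=> _ [H _]; apply: H. Qed.
Lemma srM (K : fieldType) (A : K -> Prop) x y : subring A -> A x -> A y -> A (x * y).
Proof. by case=> _ [_ H]; apply: H. Qed.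
Lemma sr0 (K : fieldType) (A : K -> Prop) : subring A -> A 0.
Proof. by move=> H; rewrite -(subrr 1); apply: srB => //; apply: sr1. Qed.
Lemma srN (K : fieldType) (A : K -> Prop) x : subring A -> A x -> A (- x).
Proof. by move=> H Hx; rewrite -sub0r; apply: srB => //; apply: sr0. Qed.
Lemma srD (K : fieldType) (A : K -> Prop) x y : subring A -> A x -> A y -> A (x + y).
Proof. by move=> H Hx Hy; rewrite -(opprK y); apply: srB => //; apply: srN. Qed.
Lemma srX (K : fieldType) (A : K -> Prop) x n : subring A -> A x -> A (x ^+ n).
Proof.
move=> H Hx; elim: n => [|n IH]; first by rewrite expr0; apply: sr1.
by rewrite exprS; apply: srM.
Qed.
Lemma srn (K : fieldType) (A : K -> Prop) n : subring A -> A n%:R.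
Proof.
move=> H; elim: n => [|n IH]; first exact: sr0.
by rewrite -addn1 natrD; apply: srD => //; apply: sr1.
Qed.
Lemma sr_sum (K : fieldType) (A : K -> Prop) (I : Type) (r : seq I) (P : pred I) (F : I -> K) :
  subring A -> (forall i, P i -> A (F i)) -> A (\sum_(i <- r | P i) F i).
Proof.
move=> H HF; elim/big_rec: _ => [|i x Pi Ax]; first exact: sr0.
by apply: srD => //; apply: HF.
Qed.
Lemma sr_prod (K : fieldType) (A : K -> Prop) (I : Type) (r : seq I) (P : pred I) (F : I -> K) :
  subring A -> (forall i, P i -> A (F i)) -> A (\prod_(i <- r | P i) F i).
Proof.
move=> H HF; elim/big_rec: _ => [|i x Pi Ax]; first exact: sr1.
by apply: srM => //; apply: HF.
Qed.
Lemma srT (K : fieldType) : subring (fun _ : K => True).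
Proof. by []. Qed.
Lemma sr_inter (K : fieldType) (I : Type) (P : I -> Prop) (W : I -> K -> Prop) :
  (forall i, P i -> subring (W i)) -> subring (fun x => forall i, P i -> W i x).
Proof.
move=> H; split; first by move=> i Pi; apply: sr1; apply: H.
split=> x y Hx Hy i Pi; [apply: srB|apply: srM]; by [apply: H| apply: Hx | apply: Hy].
Qed.

Lemma zbasic_qc (K : fieldType) (D : K -> Prop) F : zquasicompact D (zbasic D F).
Proof.
move=> I V HV cov.
pose R0 := fun x => forall T, zbasic D F T -> T x.
have HR0 : zbasic D F R0.
  split; last by move=> x xF T [_ HT]; apply: HT.
  split; last by move=> x Dx T [[_ HT] _]; apply: HT.
  by apply: (@sr_inter K (K -> Prop) (zbasic D F)) => T [[ST _] _].
have [i Vi] := cov R0 HR0.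
have [F' [H1 H2]] := (HV i).2 R0 Vi.
exists 1%N, (fun _ => i) => R HR; exists 0%N; split => //.
apply: H2; split; first by case: HR.
by move=> x xF'; have := (H1.2 x xF'); apply.
Qed.

Lemma prufer_intclosed (K : fieldType) (D R : K -> Prop) :
  quotient_field_of D -> overring D R -> prufer R -> integrally_closed R.
Proof.
move=> QF [SR DR] PR x [p [mon [cR rt]]].
have pn0 : p != 0 by apply: monic_neq0.
set d := (size p).-1.
have sp : size p = d.+1 by rewrite /d prednK // size_poly_gt0.
have lc : p`_d = 1 by move: mon => /monicP; rewrite lead_coefE sp.
have px : p.[x] = 0 by apply/eqP.
have d1 : (0 < d)%N.
  case: (posnP d) => // d0; exfalso.
  move: px lc; rewrite horner_coef sp d0 big_ord1 expr0 mulr1 => ->.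
  by move=> /eqP; rewrite eq_sym oner_eq0.
have [a [b [Da [Db [bn0 xab]]]]] := QF x.
pose c := b ^+ d.
have cn0 : c != 0 by rewrite expf_neq0.
have bx : b * x = a by rewrite xab mulrC divfK.
have hc : forall i, (i <= d)%N -> R (c * x ^+ i).
  move=> i id; have -> : c * x ^+ i = b ^+ (d - i) * a ^+ i.
    by rewrite /c -{1}(subnK id) exprD -mulrA -exprMn bx.
  by apply: srM => //; apply: srX => //; apply: DR.
pose I := fun y => exists q : {poly K}, (forall i, R q`_i) /\ (size q <= d)%N /\ y = c * q.[x].
have IR : forall y, I y -> R y.
  move=> y [q [qR [sq ->]]]; rewrite (horner_coef_wide _ sq) mulr_sumr.
  apply: sr_sum => // i _; rewrite mulrCA; apply: srM => //; apply: hc.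
  by apply: ltnW.
have Iid : ideal R I.
  split => //; split; first by exists 0; rewrite horner0 mulr0 size_poly0; split; [move=> i; rewrite coef0; apply: sr0|].
  split.
    move=> y z [q [qR [sq ->]]] [q' [qR' [sq' ->]]]; exists (q + q'); split.
      by move=> i; rewrite coefD; apply: srD.
    by rewrite hornerD mulrDr; split => //; apply: (leq_trans (size_add _ _)); rewrite geq_max sq sq'.
  move=> r y Rr [q [qR [sq ->]]]; exists (r *: q); split.
    by move=> i; rewrite coefZ; apply: srM.
  split; first by apply: (leq_trans (size_scale_leq _ _)).
  by rewrite hornerZ mulrCA.
pose xs := mkseq (fun i => c * x ^+ i) d.
have Ifg : finitely_generated R I.
  exists xs; split.
    by move=> z /mapP [i]; rewrite mem_iota add0n => /andP [_ id] ->; apply: hc; apply: ltnW.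
  move=> y; split.
    move=> [q [qR [sq ->]]]; exists (mkseq (fun i => q`_i) d).
    rewrite !size_mkseq; split => //; split.
      by move=> z /mapP [i _ ->].
    rewrite (horner_coef_wide _ sq) mulr_sumr; apply: eq_bigr => i _.
    by rewrite !nth_mkseq // mulrCA.
  move=> [cs [scs [csR ->]]]; exists (\poly_(i < d) cs`_i); split.
    move=> i; rewrite coef_poly; case: ifP => _; last exact: sr0.
    case: (ltnP i (size cs)) => ics; first by apply: csR; apply: mem_nth.
    by rewrite nth_default //; apply: sr0.
  split; first exact: size_poly.
  rewrite size_mkseq (horner_coef_wide _ (size_poly _ _)) mulr_sumr; apply: eq_bigr => i _.
  by rewrite coef_poly ltn_ord nth_mkseq // mulrCA.
have Inz : exists y, I y /\ y != 0.
  exists c; split => //; exists 1; split.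
    by move=> i; rewrite coef1; case: (i == 0%N); [apply: sr1|apply: sr0].
  by rewrite size_poly1 hornerC mulr1.
have xI : forall y, I y -> I (x * y).
  move=> y [q [qR [sq ->]]].
  pose q1 := q * 'X - (q * 'X)`_d *: p.
  exists q1; split.
    move=> i; rewrite /q1 coefB coefZ !coefMX; apply: srB => //; last by apply: srM => //; case: ifP => _; [apply: sr0|].
    by case: ifP => _; [apply: sr0|].
  split.
    apply/leq_sizeP => j dj; rewrite /q1 coefB coefZ.
    case: (eqVneq j d) => [->|jd]; first by rewrite lc mulr1 subrr.
    have dlj : (d < j)%N by rewrite ltn_neqAle eq_sym jd dj.
    rewrite (nth_default 0 (_ : size p <= j)%N) ?sp // mulr0 subr0 coefMX.
    case: ifP => // _; rewrite nth_default //; apply: (leq_trans sq).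
    by rewrite -ltnS prednK //; apply: (leq_ltn_trans _ dlj).
  by rewrite /q1 hornerD hornerN hornerZ px mulr0 subr0 hornerMX mulrCA [x * _]mulrC.
have := (PR I Iid Ifg Inz 1).2 (sr1 SR).
move=> [n [A [B [HAB e1]]]].
rewrite -(mulr1 x) e1 mulr_sumr; apply: sr_sum => // i _.
have [IA CB] := HAB i (ltn_ord i).
rewrite mulrA mulrC; apply: CB; by apply: xI.
Qed.

Lemma dir1 (K : fieldType) (D : K -> Prop) (R : K -> Prop) :
  quotient_field_of D ->
  constructible_closure D (fun R' => overring D R' /\ semilocal R' /\ prufer R') R ->
  overring D R /\ integrally_closed R.
Proof.
move=> QF [oR H]; split => // x [p [mon [cR rt]]].
case: (classic (R x)) => // nRx; exfalso.
pose U := fun k : nat => if k == 0%N then zbasic D p else zbasic D (x :: p).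
have [||R' [oR' [[_ [_ pR']] HR']]] := H 2%N U (fun k => k == 0%N).
- move=> k _; split; last by rewrite /U; case: ifP => _; exact: zbasic_qc.
  split; first by move=> T; rewrite /U; case: ifP => _ [].
  by rewrite /U; case: ifP => _ T UT; [exists (polyseq p)|exists (x :: p)].
- move=> [|[|k]] // _; rewrite /U /=; split => //.
  + move=> _; split => // z zp; rewrite -(nth_index 0 zp); exact: cR.
  + by move=> [_ Hx]; case: nRx; apply: Hx; rewrite inE eqxx.
have [_ U0] := HR' 0%N isT; have [U1 _] := HR' 1%N isT.
have U0' := U0 erefl; rewrite /U /= in U0'.
have Rx : R' x.
  apply: (prufer_intclosed QF oR' pR'); exists p; split => //; split => // i.
  case: (ltnP i (size p)) => ip; first by apply: U0'.2; apply: mem_nth.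
  by rewrite nth_default //; apply: sr0; case: oR'.
have : (1 == 0)%N = true.
  apply: U1; rewrite /U /=; split; first by case: U0'.
  move=> z; rewrite inE => /orP [/eqP ->|zp] //; exact: U0'.2.
done.
Qed.

Definition valring (K : fieldType) (V : K -> Prop) :=
  subring V /\ forall x : K, x != 0 -> V x \/ V x^-1.
Definition vunit (K : fieldType) (V : K -> Prop) (x : K) := V x /\ V x^-1 /\ x != 0.

Lemma vunit1 (K : fieldType) (V : K -> Prop) : valring V -> vunit V 1.
Proof. by case=> S _; split; [apply: sr1|rewrite invr1; split; [apply: sr1|apply: oner_neq0]]. Qed.

Lemma vunitM (K : fieldType) (V : K -> Prop) x y :
  valring V -> vunit V x -> vunit V y -> vunit V (x * y).
Proof.
case=> S _ [Vx [Vx' x0]] [Vy [Vy' y0]]; split; first exact: srM.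
by rewrite invfM; split; [apply: srM|rewrite mulf_neq0].
Qed.

Lemma vunitV (K : fieldType) (V : K -> Prop) x : vunit V x -> vunit V x^-1.
Proof. by case=> [Vx [Vx' x0]]; split => //; rewrite invrK invr_eq0. Qed.

Lemma nonunit0 (K : fieldType) (V : K -> Prop) : ~ vunit V 0.
Proof. by case=> _ [_]; rewrite eqxx. Qed.

Lemma nonunitM (K : fieldType) (V : K -> Prop) x y :
  valring V -> V x -> ~ vunit V x -> V y -> ~ vunit V (x * y).
Proof.
move=> [S _] Vx nx Vy [_ [Vxy xy0]]; apply: nx; split => //.
move: xy0; rewrite mulf_eq0 negb_or => /andP [x0 y0]; split => //.
have -> : x^-1 = y * (x * y)^-1 by rewrite invfM mulrCA mulfV // mulr1.
exact: srM.
Qed.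

Lemma nonunitN (K : fieldType) (V : K -> Prop) x :
  valring V -> V x -> ~ vunit V x -> ~ vunit V (- x).
Proof.
move=> HV Vx nx; rewrite -mulrN1; apply: nonunitM => //.
by apply: srN; [case: HV|apply: sr1; case: HV].
Qed.

Lemma nonunitD (K : fieldType) (V : K -> Prop) x y :
  valring V -> V x -> ~ vunit V x -> V y -> ~ vunit V y -> ~ vunit V (x + y).
Proof.
move=> HV Vx nx Vy ny.
case: (eqVneq x 0) => [->|x0]; first by rewrite add0r.
case: (eqVneq y 0) => [->|y0]; first by rewrite addr0.
have S := HV.1.
have xy0 : x / y != 0 by rewrite mulf_neq0 // invr_eq0.
case: (HV.2 _ xy0) => H.
  have -> : x + y = y * (x / y + 1) by rewrite mulrDr mulr1 mulrC divfK.
  by apply: nonunitM => //; apply: srD => //; apply: sr1.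
have -> : x + y = x * (1 + y / x) by rewrite mulrDr mulr1 mulrC divfK.
apply: nonunitM => //; apply: srD => //; first exact: sr1.
by rewrite -invf_div.
Qed.

Lemma unitD (K : fieldType) (V : K -> Prop) x y :
  valring V -> vunit V x -> V y -> ~ vunit V y -> vunit V (x + y).
Proof.
move=> HV ux Vy ny; case: (classic (vunit V (x + y))) => // nxy; exfalso.
have S := HV.1.
have : ~ vunit V ((x + y) + - y).
  apply: nonunitD => //; [apply: srD => //; by case: ux| exact: srN| exact: nonunitN].
by rewrite addrK.
Qed.

Lemma nonunit_sum (K : fieldType) (V : K -> Prop) (I : Type) (r : seq I) (P : pred I) (F : I -> K) :
  valring V -> (forall i, P i -> V (F i) /\ ~ vunit V (F i)) ->
  V (\sum_(i <- r | P i) F i) /\ ~ vunit V (\sum_(i <- r | P i) F i).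
Proof.
move=> HV HF; elim/big_rec: _ => [|i x Pi [Vx nx]].
  by split; [apply: sr0; case: HV| apply: nonunit0].
have [VF nF] := HF i Pi; split; first by apply: srD => //; case: HV.
exact: nonunitD.
Qed.

Lemma unit_prod (K : fieldType) (V : K -> Prop) (I : Type) (r : seq I) (P : pred I) (F : I -> K) :
  valring V -> (forall i, P i -> vunit V (F i)) -> vunit V (\prod_(i <- r | P i) F i).
Proof.
move=> HV HF; elim/big_rec: _ => [|i x Pi ux]; first exact: vunit1.
by apply: vunitM => //; apply: HF.
Qed.

Definition gs (K : fieldType) (y : K) (M : nat) := \sum_(t < M.+1) y ^+ t.

Lemma gs_recl (K : fieldType) (y : K) M : gs y M = 1 + y * \sum_(t < M) y ^+ t.
Proof.
rewrite /gs big_ord_recl expr0 mulr_sumr; congr (_ + _).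
by apply: eq_bigr => i _; rewrite exprS.
Qed.

Lemma gs_nonunit (K : fieldType) (V : K -> Prop) y M :
  valring V -> V y -> ~ vunit V y -> vunit V (gs y M).
Proof.
move=> HV Vy ny; have S := HV.1; rewrite gs_recl.
have Vs : V (\sum_(t < M) y ^+ t) by apply: sr_sum => // i _; apply: srX.
apply: unitD => //; first exact: vunit1.
  exact: srM.
by apply: nonunitM.
Qed.

Lemma sr_sum_seq (K : fieldType) (A : K -> Prop) (r : seq nat) (F : nat -> K) :
  subring A -> (forall i, i \in r -> A (F i)) -> A (\sum_(i <- r) F i).
Proof. by move=> S H; rewrite big_seq; apply: sr_sum. Qed.
Lemma sr_prod_seq (K : fieldType) (A : K -> Prop) (r : seq nat) (F : nat -> K) :
  subring A -> (forall i, i \in r -> A (F i)) -> A (\prod_(i <- r) F i).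
Proof. by move=> S H; rewrite big_seq; apply: sr_prod. Qed.

Definition good (K : fieldType) (V : K -> Prop) (y : K) (M : nat) :=
  vunit V y -> (vunit V (y - 1) -> vunit V (y ^+ M.+1 - 1)) /\
               (~ vunit V (y - 1) -> vunit V (M.+1)%:R).

Lemma gs_unit (K : fieldType) (V : K -> Prop) y M :
  valring V -> vunit V y -> good V y M -> vunit V (gs y M).
Proof.
move=> HV uy g; have S := HV.1; have [g1 g2] := g uy; have Vy := uy.1.
case: (classic (vunit V (y - 1))) => u1.
  have y1 : y - 1 != 0 by case: u1 => _ [].
  have -> : gs y M = (y - 1)^-1 * (y ^+ M.+1 - 1) by rewrite subrX1 mulrA mulVf // mul1r.
  by apply: vunitM => //; [apply: vunitV | apply: g1].
have -> : gs y M = (M.+1)%:R + \sum_(t < M.+1) (y ^+ t - 1).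
  by rewrite sumrB sumr_const card_ord addrC subrK.
have [Vs ns] : V (\sum_(t < M.+1) (y ^+ t - 1)) /\ ~ vunit V (\sum_(t < M.+1) (y ^+ t - 1)).
  apply: nonunit_sum => // i _; rewrite subrX1.
  have Vs : V (\sum_(i0 < i) y ^+ i0) by apply: sr_sum => // k _; apply: srX.
  split; first by apply: srM => //; apply: srB => //; apply: sr1.
  by apply: nonunitM => //; apply: srB => //; apply: sr1.
by apply: unitD => //; apply: g2.
Qed.

Lemma gs_out (K : fieldType) (V : K -> Prop) y M :
  valring V -> ~ V y -> V (gs y M)^-1 /\ ((0 < M)%N -> V (y * (gs y M)^-1)).
Proof.
move=> HV ny; have S := HV.1.
have y0 : y != 0 by apply/eqP => y0; apply: ny; rewrite y0; apply: sr0.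
have Vu : V y^-1 by case: (HV.2 y y0).
have nu : ~ vunit V y^-1 by move=> [_ [H _]]; apply: ny; rewrite invrK in H.
have ug := gs_nonunit M HV Vu nu.
have e : gs y M = y ^+ M * gs y^-1 M.
  rewrite /gs mulr_sumr (reindex_inj rev_ord_inj) /=; apply: eq_bigr => i _.
  have iM : (i <= M)%N by rewrite -ltnS.
  have e2 : y ^+ M = y ^+ (M - i) * y ^+ i by rewrite -exprD subnK.
  rewrite subSS e2 -mulrA exprVn mulfV ?mulr1 //.
  by rewrite expf_neq0.
rewrite e invfM -exprVn; split.
  by apply: srM => //; [apply: srX|case: ug => _ []].
case: M {e ug} => // M _; rewrite exprS !mulrA mulfV // mul1r.
by apply: srM => //; [apply: srX|case: (gs_nonunit M.+1 HV Vu nu) => _ []].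
Qed.

Lemma good_exists (K : fieldType) (V : K -> Prop) y :
  valring V -> exists N, (0 < N)%N /\ forall M, (N %| M)%N -> good V y M.
Proof.
move=> HV; have S := HV.1.
have [N1 [N1p H1]] : exists N1, (0 < N1)%N /\
   ((exists N, (0 < N)%N /\ ~ vunit V (y ^+ N - 1)) -> ~ vunit V (y ^+ N1 - 1)).
  case: (classic (exists N, (0 < N)%N /\ ~ vunit V (y ^+ N - 1))) => [[N [Np HN]]|nH].
    by exists N.
  by exists 1%N; split => // HH; case: nH.
have [N2 [N2p H2]] : exists N2, (0 < N2)%N /\
   ((exists N, (0 < N)%N /\ ~ vunit V N%:R) -> ~ vunit V N2%:R).
  case: (classic (exists N, (0 < N)%N /\ ~ vunit V N%:R)) => [[N [Np HN]]|nH].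
    by exists N.
  by exists 1%N; split => // HH; case: nH.
exists (N1 * N2)%N; split; first by rewrite muln_gt0 N1p.
move=> M dM uy; have Vy := uy.1; split.
  move=> u1; case: (classic (vunit V (y ^+ M.+1 - 1))) => // nM; exfalso.
  have n1 := H1 (ex_intro _ M.+1 (conj (ltn0Sn M) nM)).
  have d1 : (N1 %| M)%N by apply: dvdn_trans dM; apply: dvdn_mulr.
  have V1 : V (y ^+ N1 - 1) by apply: srB => //; [apply: srX|apply: sr1].
  have nyM : ~ vunit V (y ^+ M - 1).
    rewrite -(divnK d1) mulnC exprM subrX1; apply: nonunitM => //.
    by apply: sr_sum => // k _; apply: srX => //; apply: srX.
  have VM : V (y ^+ M - 1) by apply: srB => //; [apply: srX|apply: sr1].
  apply: nM; have -> : y ^+ M.+1 - 1 = (y - 1) + (y ^+ M - 1) * y.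
    by rewrite exprSr mulrBl mul1r [RHS]addrC addrA subrK.
  by apply: unitD => //; [apply: srM|apply: nonunitM].
move=> _; case: (classic (vunit V (M.+1)%:R)) => // nM; exfalso.
have n2 := H2 (ex_intro _ M.+1 (conj (ltn0Sn M) nM)).
have d2 : (N2 %| M)%N by apply: dvdn_trans dM; apply: dvdn_mull.
have nM' : ~ vunit V M%:R.
  by rewrite -(divnK d2) natrM mulrC; apply: nonunitM => //; apply: srn.
apply: nM; rewrite -addn1 natrD addrC; apply: unitD => //; last exact: srn.
by rewrite mulr1n; apply: vunit1.
Qed.

Lemma good_list (T : eqType) (G : T -> nat -> Prop) (s : seq T) :
  (forall t, t \in s -> exists N, (0 < N)%N /\ forall M, (N %| M)%N -> G t M) ->
  exists N, (0 < N)%N /\ forall t, t \in s -> forall M, (N %| M)%N -> G t M.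
Proof.
elim: s => [|a s IH] H; first by exists 1%N.
have [Na [Nap Ha]] := H a (mem_head _ _).
have [|Ns [Nsp Hs]] := IH; first by move=> t ts; apply: H; rewrite inE ts orbT.
exists (Na * Ns)%N; split; first by rewrite muln_gt0 Nap.
move=> t; rewrite inE => /orP [/eqP -> | ts] M dM.
  by apply: Ha; apply: dvdn_trans dM; apply: dvdn_mulr.
by apply: Hs => //; apply: dvdn_trans dM; apply: dvdn_mull.
Qed.

Lemma mingen (K : fieldType) (V : K -> Prop) (xs : seq K) :
  valring V -> (exists x, x \in xs /\ x != 0) ->
  exists g, g \in xs /\ g != 0 /\ forall x, x \in xs -> V (x / g).
Proof.
move=> HV; have S := HV.1; elim: xs => [|a l IH] [x [xin x0]]; first by [].
case: (classic (exists x, x \in l /\ x != 0)) => [Hl|nHl].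
  have [g [gl [g0 Hg]]] := IH Hl.
  case: (eqVneq a 0) => [a0|an0].
    exists g; split; first by rewrite inE gl orbT.
    split => // z; rewrite inE => /orP [/eqP ->|]; last exact: Hg.
    by rewrite a0 mul0r; apply: sr0.
  have ag0 : a / g != 0 by rewrite mulf_neq0 // invr_eq0.
  case: (HV.2 _ ag0) => H.
    exists g; split; first by rewrite inE gl orbT.
    by split => // z; rewrite inE => /orP [/eqP ->|]; last exact: Hg.
  exists a; split; first exact: mem_head.
  split => // z; rewrite inE => /orP [/eqP ->|zl]; first by rewrite mulfV //; apply: sr1.
  have -> : z / a = (z / g) * (a / g)^-1 by rewrite invf_div mulrA divfK.
  by apply: srM => //; apply: Hg.
have an0 : a != 0.
  by move: xin; rewrite inE => /orP [/eqP <- //|xl]; case: nHl; exists x.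
exists a; split; first exact: mem_head.
split => // z; rewrite inE => /orP [/eqP ->|zl]; first by rewrite mulfV //; apply: sr1.
have -> : z = 0 by case: (eqVneq z 0) => // zn; case: nHl; exists z.
by rewrite mul0r; apply: sr0.
Qed.

Lemma choice_fun (A B : Type) (Q : A -> B -> Prop) :
  (forall a, exists b, Q a b) -> exists f : A -> B, forall a, Q a (f a).
Proof.
move=> H; exists (fun a => proj1_sig (constructive_indefinite_description _ (H a))).
by move=> a; exact: proj2_sig.
Qed.

Lemma L_prod (K : fieldType) (L : K -> Prop) (s : seq nat) (f : nat -> K) :
  s != [::] -> (forall x y, L x -> L y -> L (x * y)) ->
  (forall i, i \in s -> L (f i)) -> L (\prod_(i <- s) f i).
Proof.
elim: s => // a [|b s] IH _ LM Hf; first by rewrite big_seq1; apply: Hf; apply: mem_head.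
rewrite big_cons; apply: (LM); first by apply: Hf; apply: mem_head.
by apply: IH => // i ib; apply: Hf; rewrite inE ib orbT.
Qed.

Lemma nonunit_prod (K : fieldType) (V : K -> Prop) (s : seq nat) (F : nat -> K) i :
  valring V -> i \in s -> (forall k, k \in s -> V (F k)) -> ~ vunit V (F i) ->
  ~ vunit V (\prod_(k <- s) F k).
Proof.
move=> HV; have S := HV.1; elim: s => // a s IH; rewrite inE => /orP [/eqP ->|ins] HF nF;
  rewrite big_cons.
  apply: nonunitM => //; first by apply: HF; apply: mem_head.
  by apply: sr_prod_seq => // k ks; apply: HF; rewrite inE ks orbT.
rewrite mulrC; apply: nonunitM => //.
- by apply: sr_prod_seq => // k ks; apply: HF; rewrite inE ks orbT.
- by apply: IH => // k ks; apply: HF; rewrite inE ks orbT.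
- by apply: HF; apply: mem_head.
Qed.

Lemma PA (K : fieldType) (W : nat -> K -> Prop) (L : K -> Prop) n (js : seq nat) :
  size js = n.+1 -> uniq js -> (forall j, j \in js -> valring (W j)) ->
  (forall x, L x -> forall j, j \in js -> W j x) ->
  (forall x y, L x -> L y -> L (x + y)) -> (forall x y, L x -> L y -> L (x * y)) ->
  (forall j, j \in js -> exists z, L z /\ vunit (W j) z) ->
  exists z, L z /\ forall j, j \in js -> vunit (W j) z.
Proof.
elim: n js => [|n IH] js.
  case: js => [|j [|? ?]] // _ _ _ _ _ _ H.
  have [z [Lz uz]] := H j (mem_head _ _).
  by exists z; split => // i; rewrite inE => /eqP ->.
move=> sz uq Wv LW LD LM H.
have Hi : forall i, exists z, i \in js -> L z /\ forall j, j \in rem i js -> vunit (W j) z.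
  move=> i; case: (classic (i \in js)) => ijs; last by exists 0.
  have [||||z [Lz Hz]] := IH (rem i js) _ (rem_uniq _ uq) _ _ LD LM.
  - by rewrite size_rem // sz.
  - by move=> j /mem_rem; apply: Wv.
  - by move=> x Lx j /mem_rem; apply: LW.
  - by move=> j /mem_rem; apply: H.
  by exists z.
have [f Hf] := choice_fun Hi; clear Hi.
case: (classic (exists i, i \in js /\ vunit (W i) (f i))) => [[i [ijs ui]]|nH].
  exists (f i); have [Lf Hfi] := Hf i ijs; split => // j jjs.
  case: (eqVneq j i) => [-> //|ji]; apply: Hfi.
  by rewrite (mem_rem_uniq _ uq) inE ji jjs.
have nf : forall i, i \in js -> ~ vunit (W i) (f i) by move=> i ijs ui; apply: nH; exists i.
clear IH nH.
case: js sz uq Wv LW H Hf nf => // j0 js' [sz'] uq Wv LW H Hf nf.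
have js'n : js' != [::] by case: js' sz' {uq Wv LW H Hf nf}.
have j0n : j0 \notin js' by move: uq; rewrite cons_uniq => /andP [].
have Hf' : forall i, i \in js' -> L (f i) /\ vunit (W j0) (f i).
  move=> i ijs; have ijs2 : i \in j0 :: js' by rewrite inE ijs orbT.
  have [Li Hi] := Hf i ijs2.
  split => //; apply: Hi.
  rewrite (mem_rem_uniq _ uq) inE mem_head andbT.
  by apply/eqP => e; move: j0n; rewrite e ijs.
have [Lj0 uj0] := Hf j0 (mem_head _ _).
rewrite /= eqxx in uj0.
have Lp : L (\prod_(i <- js') f i) by apply: L_prod => // i ijs; case: (Hf' i ijs).
exists (f j0 + \prod_(i <- js') f i); split; first exact: LD.
move=> j; rewrite inE => /orP [/eqP ->|jjs'].
  have HV := Wv j0 (mem_head _ _).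
  rewrite addrC; apply: unitD => //.
  - by rewrite big_seq; apply: unit_prod => // i ijs; case: (Hf' i ijs).
  - by apply: LW => //; apply: mem_head.
  - by apply: nf; apply: mem_head.
have jjs : j \in j0 :: js' by rewrite inE jjs' orbT.
have HV := Wv j jjs.
apply: unitD => //; first by apply: uj0.
  by apply: LW.
apply: (nonunit_prod HV jjs').
  by move=> k ks; apply: LW; [case: (Hf' k ks)|].
by apply: nf.
Qed.

Lemma prod_mul_in (K : fieldType) (V : K -> Prop) (s : seq K) (F : K -> K) y0 :
  subring V -> y0 \in s -> (forall y, y \in s -> V (F y) /\ V (y * F y)) ->
  V ((\prod_(y <- s) F y) * y0).
Proof.
move=> S; elim: s => // a s IH; rewrite inE => /orP [/eqP ->|ys] H; rewrite big_cons.
  have Vp : V (\prod_(y <- s) F y).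
    by rewrite big_seq; apply: sr_prod => // y ys; case: (H y); rewrite ?inE ?ys ?orbT.
  rewrite mulrAC [F a * a]mulrC; apply: srM => //.
  by case: (H a (mem_head _ _)).
rewrite -mulrA; apply: srM => //; first by case: (H a (mem_head _ _)).
by apply: IH => // y yy; apply: H; rewrite inE yy orbT.
Qed.

Lemma fin_inter (K : fieldType) (W : nat -> K -> Prop) (js : seq nat) :
  js != [::] -> uniq js -> (forall j, j \in js -> valring (W j)) ->
  semilocal (fun x => forall j, j \in js -> W j x) /\
  prufer (fun x => forall j, j \in js -> W j x).
Proof.
move=> jsn uq Wv; set A := fun x => forall j, j \in js -> W j x.
have SA : subring A.
  by apply: (@sr_inter K nat (fun j => j \in js)) => j jjs; case: (Wv j jjs).
have [n sz] : exists n, size js = n.+1 by case: js jsn {A SA uq Wv} => // a l _; exists (size l).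
have [j1 j1js] : exists j, j \in js by case: js jsn {A SA uq Wv sz} => // a l _; exists a; apply: mem_head.
split.
  exists (size js), (fun k x => A x /\ ~ vunit (W (nth 0%N js k)) x).
  move=> N [[NA [N0 [ND NM]]] [[x0 [Ax0 nx0]] Nmax]].
  case: (classic (exists j, j \in js /\ forall x, N x -> ~ vunit (W j) x)) => [[j [jjs Hj]]|nH].
    exists (index j js); split; first by rewrite index_mem.
    rewrite nth_index //.
    set P := fun x => A x /\ ~ vunit (W j) x.
    have HV := Wv j jjs.
    have Pid : ideal A P.
      split; first by move=> x [].
      split; first by split; [apply: sr0 | apply: nonunit0].
      split.
        move=> x y [Ax nx] [Ay ny]; split; first exact: (srD SA).
        by apply: nonunitD => //; [apply: Ax|apply: Ay].
      move=> r x Ar [Ax nx]; split; first exact: (srM SA).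
      by rewrite mulrC; apply: nonunitM => //; [apply: Ax|apply: Ar].
    have NP : forall x, N x -> P x by move=> x Nx; split; [apply: NA|apply: Hj].
    case: (Nmax P Pid NP) => HP x; first exact: (iff_sym (HP x)).
    exfalso; have [_ ] := (HP 1).2 (sr1 SA); apply; apply: (vunit1 HV).
  have H' : forall j, j \in js -> exists z, N z /\ vunit (W j) z.
    move=> j jjs; apply: NNPP => nz; apply: nH; exists j; split => // x Nx ux.
    by apply: nz; exists x.
  have [z [Nz uz]] := PA sz uq Wv (fun x Nx => NA x Nx) ND (fun x y Nx Ny => NM x y (NA x Nx) Ny) H'.
  have Azi : A z^-1 by move=> j jjs; case: (uz j jjs) => _ [].
  have z0 : z != 0 by case: (uz j1 j1js) => _ [].
  have N1 : N 1 by have := NM _ _ Azi Nz; rewrite mulVf.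
  by exfalso; apply: nx0; rewrite -(mulr1 x0); apply: NM.
move=> I [IA [I0 [ID IM]]] [xs [xsA Hxs]] [x1 [Ix1 x1n]].
set L := set_prod I (colon A I).
have LA : forall z, L z -> A z.
  move=> z [m [a [b [Hab ->]]]]; apply: sr_sum => // i _.
  by have [Ia Cb] := Hab i (ltn_ord i); rewrite mulrC; apply: Cb.
have LD : forall z z', L z -> L z' -> L (z + z').
  move=> z z' [m [a [b [Hab ->]]]] [m' [a' [b' [Hab' ->]]]].
  exists (m + m')%N, (fun i => if (i < m)%N then a i else a' (i - m)%N),
    (fun i => if (i < m)%N then b i else b' (i - m)%N); split.
    move=> i im; case: ifP => h; first exact: Hab.
    by apply: Hab'; rewrite ltn_subLR // leqNgt h.
  rewrite big_split_ord /=; congr (_ + _); apply: eq_bigr => i _ /=.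
    by rewrite ltn_ord.
  by rewrite ltnNge leq_addr /= addKn.
have LAm : forall c z, A c -> L z -> L (c * z).
  move=> c z Ac [m [a [b [Hab ->]]]]; exists m, a, (fun i => c * b i); split.
    move=> i im; have [Ia Cb] := Hab i im; split => // y Iy.
    by rewrite -mulrA; apply: (srM SA) => //; apply: Cb.
  by rewrite mulr_sumr; apply: eq_bigr => i _; rewrite mulrCA.
have LM : forall x y, L x -> L y -> L (x * y) by move=> x y Lx Ly; apply: LAm => //; apply: LA.
suff [u [Lu uu]] : exists u, L u /\ forall j, j \in js -> vunit (W j) u.
  move=> z; split; first exact: LA.
  move=> Az; have u0 : u != 0 by case: (uu j1 j1js) => _ [].
  have Au' : A u^-1 by move=> j jjs; case: (uu j jjs) => _ [].
  rewrite -(mulr1 z) -(mulVf u0) mulrA; apply: LAm => //; exact: (srM SA).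
apply: (PA sz uq Wv) => //.
have xsn : exists x, x \in xs /\ x != 0.
  apply: NNPP => nx; move: x1n.
  have [cs [_ [_ ->]]] := (Hxs x1).1 Ix1; rewrite big1 ?eqxx // => i _.
  have -> : xs`_i = 0.
    case: (eqVneq xs`_i 0) => // ne; exfalso; apply: nx; exists xs`_i; split => //.
    exact: mem_nth.
  by rewrite mulr0.
set allr := [seq x / g | x <- xs, g <- xs].
have [M [Mp HM]] : exists M, (0 < M)%N /\ forall t, t \in [seq (j, r) | j <- js, r <- allr] ->
    forall M', (M %| M')%N -> good (W t.1) t.2 M'.
  apply: (@good_list _ (fun (p : nat * K) M => good (W p.1) p.2 M)).
  by move=> t /allpairsP [[j r] [/= jjs _ ->]]; apply: good_exists; apply: Wv.
have gM : forall j r, j \in js -> r \in allr -> good (W j) r M.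
  move=> j r jjs rin; apply: (HM (j, r)) => //.
  by apply/allpairsP; exists (j, r).
move=> j jjs; have HV := Wv j jjs; have SV := HV.1.
have [g [gxs [g0 Hg]]] := mingen HV xsn.
set ys := [seq x / g | x <- xs].
have ysr : forall y, y \in ys -> y \in allr.
  by move=> y /mapP [x xxs ->]; apply/allpairsP; exists (x, g).
have Hys : forall y i, y \in ys -> i \in js ->
    W i (gs y M)^-1 /\ W i (y * (gs y M)^-1).
  move=> y i yys ijs; have HVi := Wv i ijs; have SVi := HVi.1.
  have gi := gM i y ijs (ysr y yys).
  case: (classic (W i y)) => Wy.
    have ug : vunit (W i) (gs y M).
      case: (classic (vunit (W i) y)) => uy; first exact: gs_unit.
      exact: gs_nonunit.
    by case: ug => _ [H _]; split => //; apply: srM.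
  by have [H1 H2] := gs_out M HVi Wy; split => //; apply: H2.
set b' := \prod_(y <- ys) (gs y M)^-1.
set b := b' / g.
exists b'; split.
  have Ig : I g.
    apply: (Hxs g).2; exists (mkseq (fun i => (i == index g xs)%:R) (size xs)).
    rewrite size_mkseq; split => //; split.
      move=> c /mapP [i _ ->]; case: (i == index g xs); [exact: sr1| exact: sr0].
    have ig : (index g xs < size xs)%N by rewrite index_mem.
    rewrite (bigD1 (Ordinal ig)) //= nth_mkseq // eqxx mul1r nth_index // big1 ?addr0 //.
    move=> i ne; rewrite nth_mkseq //; case: eqP => [e|_]; last by rewrite mul0r.
    by exfalso; move: ne; rewrite -val_eqE /= e eqxx.
  have Cb : colon A I b.
    move=> w Iw; have [cs [scs [csA ->]]] := (Hxs w).1 Iw.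
    rewrite mulr_sumr; apply: sr_sum => // i _.
    have -> : b * (cs`_i * xs`_i) = cs`_i * (b' * (xs`_i / g)).
      by rewrite /b mulrCA -!mulrA [g^-1 * _]mulrC.
    apply: (srM SA); first by apply: csA; apply: mem_nth; rewrite scs.
    move=> k kjs; apply: prod_mul_in => //; first by case: (Wv k kjs).
      by apply: map_f; apply: mem_nth.
    by move=> y yys; apply: Hys.
  exists 1%N, (fun _ => g), (fun _ => b); split; first by move=> i _; split.
  by rewrite big_ord1 /b mulrC divfK.
rewrite /b' big_seq; apply: unit_prod => // y yys; apply: vunitV.
have Wy : W j y by case/mapP: yys => x xxs ->; apply: Hg.
have gj := gM j y jjs (ysr y yys).
case: (classic (vunit (W j) y)) => uy; first exact: gs_unit.
exact: gs_nonunit.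
Qed.

Lemma my_zorn (T : Type) (P : (T -> Prop) -> Prop) :
  (forall F : (T -> Prop) -> Prop, (forall X, F X -> P X) ->
     (forall X Y, F X -> F Y -> (forall x, X x -> Y x) \/ (forall x, Y x -> X x)) ->
     P (fun x => exists X, F X /\ X x)) ->
  exists A, P A /\ forall B, P B -> (forall x, A x -> B x) -> forall x, B x -> A x.
Proof.
move=> H.
have [|A [PA HA]] := @classical_sets.Zorn_bigcup T P.
  move=> F FP Ft.
  have -> : classical_sets.bigcup F id = (fun x => exists X, F X /\ X x).
    apply: functional_extensionality => x; apply: propositional_extensionality; rewrite /classical_sets.bigcup /=.
    by split; [case=> X FX Xx; exists X|case=> X [FX Xx]; exists X].
  apply: H; first by move=> X FX; apply: FP.
  by move=> X Y FX FY; case: (Ft X Y FX FY) => h; [left|right] => x; apply: h.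
exists A; split => // B PB AB x Bx; apply: NNPP => nAx.
apply: (HA B) => //; split; first by move=> z; apply: AB.
by move=> BA; apply: nAx; apply: BA.
Qed.

Definition gen (K : fieldType) (B : K -> Prop) (t : K) : K -> Prop :=
  fun x => forall T, subring T -> (forall b, B b -> T b) -> T t -> T x.

Lemma gen_sr (K : fieldType) (B : K -> Prop) t : subring (gen B t).
Proof.
split; first by move=> T ST _ _; apply: sr1.
split=> x y Hx Hy T ST HB Ht; [apply: srB|apply: srM] => //; by [apply: Hx|apply: Hy].
Qed.
Lemma gen_B (K : fieldType) (B : K -> Prop) t x : B x -> gen B t x.
Proof. by move=> Bx T _ HB _; apply: HB. Qed.
Lemma gen_t (K : fieldType) (B : K -> Prop) t : gen B t t.
Proof. by move=> T _ _ Ht. Qed.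
Lemma gen_min (K : fieldType) (B T : K -> Prop) t :
  subring T -> (forall b, B b -> T b) -> T t -> forall x, gen B t x -> T x.
Proof. by move=> ST HB Ht x Hx; apply: Hx. Qed.

Definition polyB (K : fieldType) (B : K -> Prop) (t : K) : K -> Prop :=
  fun x => exists p : {poly K}, (forall i, B p`_i) /\ x = p.[t].

Lemma gen_poly (K : fieldType) (B : K -> Prop) t x : subring B -> gen B t x -> polyB B t x.
Proof.
move=> SB; apply: gen_min.
- split; first by exists 1; split; [move=> i; rewrite coef1; case: (i == 0)%N; [apply: sr1|apply: sr0]|rewrite hornerC].
  split.
    move=> a b [p [Bp ->]] [q [Bq ->]]; exists (p - q); split; last by rewrite hornerD hornerN.
    by move=> i; rewrite coefB; apply: srB.
  move=> a b [p [Bp ->]] [q [Bq ->]]; exists (p * q); split; last by rewrite hornerM.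
  by move=> i; rewrite coefM; apply: sr_sum => // j _; apply: srM.
- move=> b Bb; exists b%:P; split; last by rewrite hornerC.
  by move=> i; rewrite coefC; case: (i == 0)%N; [|apply: sr0].
- exists 'X; split; last by rewrite hornerX.
  by move=> i; rewrite coefX; case: (i == 1)%N; [apply: sr1|apply: sr0].
Qed.

Lemma notin_gen_inv (K : fieldType) (R : K -> Prop) y :
  subring R -> integrally_closed R -> ~ R y -> ~ gen R y^-1 y.
Proof.
move=> SR IC nRy /(gen_poly SR) [p [Rp ey]].
have y0 : y != 0 by apply/eqP => y0; apply: nRy; rewrite y0; apply: sr0.
apply: nRy; apply: IC.
set d := size p.
have d0 : (0 < d)%N.
  rewrite /d size_poly_gt0; apply/eqP => p0; move: ey; rewrite p0 horner0.
  by move/eqP; rewrite (negPf y0).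
pose q := 'X^d - \poly_(k < d) p`_(d.-1 - k).
exists q; split.
  rewrite monicE /q lead_coefDl ?lead_coefXn // size_polyXn size_opp ltnS.
  exact: size_poly.
split.
  move=> i; rewrite /q coefB coefXn coef_poly; apply: srB => //.
    by case: (i == d); [apply: sr1|apply: sr0].
  by case: (i < d)%N; [apply: Rp|apply: sr0].
apply/eqP; rewrite /q hornerD hornerN hornerXn horner_poly; apply/eqP; rewrite subr_eq0; apply/eqP.
have -> : y ^+ d = y * y ^+ d.-1 by rewrite -exprS prednK.
rewrite {1}ey horner_coef -/d mulr_suml (reindex_inj rev_ord_inj) /=.
apply: eq_bigr => i _.
have id : (i <= d.-1)%N by rewrite -ltnS prednK.
have -> : y ^+ d.-1 = y ^+ (d.-1 - i) * y ^+ i by rewrite -exprD subnK.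
have -> : (d - i.+1 = d.-1 - i)%N by rewrite -add1n subnDA subn1.
rewrite mulrA -[p`_ _ * _ * _]mulrA -exprMn mulVf // expr1n mulr1.
by [].
Qed.

Definition maxring (K : fieldType) (B : K -> Prop) (z : K) :=
  subring B /\ B z /\ z != 0 /\ ~ B z^-1 /\
  forall B', subring B' -> (forall x, B x -> B' x) -> ~ B' z^-1 -> forall x, B' x -> B x.

Lemma adjoin (K : fieldType) (B : K -> Prop) z t :
  maxring B z -> ~ gen B t z^-1 -> B t.
Proof.
move=> [SB [Bz [z0 [nB Hmax]]]] ng.
apply: (Hmax (gen B t) (gen_sr B t) (fun x => @gen_B _ B t x) ng); exact: gen_t.
Qed.

Lemma local_prop (K : fieldType) (B : K -> Prop) z b :
  maxring B z -> B b -> B (1 - z * b)^-1.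
Proof.
move=> MB Bb; have [SB [Bz [z0 [nB Hmax]]]] := MB.
set s := 1 - z * b.
have Bs : B s by apply: srB => //; [apply: sr1|apply: srM].
have s0 : s != 0.
  apply/eqP => e; apply: nB.
  have -> : z^-1 = b by move/eqP: e; rewrite subr_eq0 => /eqP e; rewrite -[z^-1]mulr1 e mulKf.
  done.
apply: (adjoin MB) => Hg.
pose T := fun w => exists N, B (w * s ^+ N).
have ST : subring T.
  split; first by exists 0%N; rewrite mulr1; apply: sr1.
  split.
    move=> a c [N HN] [M HM]; exists (N + M)%N.
    have -> : (a - c) * s ^+ (N + M) = (a * s ^+ N) * s ^+ M - (c * s ^+ M) * s ^+ N.
      by rewrite exprD; ring.
    by apply: (srB SB); apply: (srM SB) => //; apply: (srX _ SB).
  move=> a c [N HN] [M HM]; exists (N + M)%N.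
  by rewrite exprD mulrACA; apply: (srM SB).
have Tz : T z^-1.
  apply: (@gen_min K B T s^-1 ST _ _ z^-1 Hg).
  - by move=> x Bx; rewrite /T; exists 0%N; rewrite mulr1.
  - by rewrite /T; exists 1%N; rewrite expr1 mulVf //; apply: sr1.
move: Tz => [N HN]; apply: nB.
have [c [Bc ec]] : exists c, B c /\ s ^+ N = 1 - z * c.
  elim: N {HN} => [|N [c [Bc ec]]]; first by exists 0; rewrite expr0 mulr0 subr0; split => //; apply: (sr0 SB).
  exists (c + b - z * c * b); split.
    by apply: (srB SB); [apply: (srD SB)|apply: (srM SB) => //; apply: (srM SB)].
  by rewrite exprSr ec /s; ring.
move: HN; rewrite ec mulrBr mulr1 mulrA mulVf // mul1r => H.
by rewrite -(subrK c z^-1); apply: (srD SB).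
Qed.

Definition Erep (K : fieldType) (B : K -> Prop) (z t : K) (d : nat) :=
  exists u : nat -> K, (forall i, B (u i)) /\ 1 = z * \sum_(i < d) u i * t ^+ i.

Lemma Erep0 (K : fieldType) (B : K -> Prop) z t : ~ Erep B z t 0.
Proof. by move=> [u [_]]; rewrite big_ord0 mulr0 => /eqP; rewrite oner_eq0. Qed.

Lemma gen_E (K : fieldType) (B : K -> Prop) z t :
  subring B -> z != 0 -> gen B t z^-1 -> exists d, Erep B z t d.
Proof.
move=> SB z0 /(gen_poly SB) [p [Bp e]]; exists (size p), (fun i => p`_i); split => //.
by rewrite -horner_coef -e mulfV.
Qed.

Lemma span (K : fieldType) (B : K -> Prop) z t n (c : nat -> K) :
  subring B -> B z -> (forall k, B (c k)) ->
  t ^+ n.+1 = z * \sum_(k < n.+1) c k * t ^+ k ->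
  forall m, exists e : nat -> K, (forall k, B (e k)) /\
     t ^+ (n.+1 + m) = z * \sum_(k < n.+1) e k * t ^+ k.
Proof.
move=> SB Bz Bc Hc; elim => [|m [e [Be He]]]; first by exists c; rewrite addn0.
exists (fun k => (if k is k'.+1 then e k' else 0) + e n * z * c k); split.
  move=> k; apply: (srD SB); first by case: k => [|k]; [apply: (sr0 SB)|].
  by apply: (srM SB) => //; apply: (srM SB).
rewrite addnS exprS He.
set f1 := fun k : nat => if k is k'.+1 then e k' else 0.
have -> : \sum_(k < n.+1) (f1 k + e n * z * c k) * t ^+ k =
   \sum_(k < n.+1) f1 k * t ^+ k + \sum_(k < n.+1) e n * z * c k * t ^+ k.
  by rewrite -big_split; apply: eq_bigr => k _; rewrite mulrDl.
rewrite [X in _ = z * (X + _)]big_ord_recl /= mul0r add0r.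
have -> : \sum_(i < n.+1) e n * z * c i * t ^+ i = e n * t ^+ n.+1.
  by rewrite Hc mulrA mulr_sumr; apply: eq_bigr => i _; rewrite !mulrA.
rewrite [X in t * (z * X)]big_ord_recr /= mulrCA mulrDr; congr (_ * (_ + _)).
  rewrite mulr_sumr; apply: eq_bigr => i _.
  by rewrite /bump /= add1n add0n exprS mulrCA.
by rewrite exprS mulrCA.
Qed.

Lemma reduce (K : fieldType) (B : K -> Prop) z t n d1 :
  maxring B z -> t != 0 -> Erep B z t^-1 n.+1 -> Erep B z t d1 -> (n < d1)%N ->
  Erep B z t n.
Proof.
move=> MB t0 [v [Bv Hv]] [u [Bu Hu]] nd.
have [SB [Bz [z0 [nB _]]]] := MB.
have H1 : t ^+ n = z * \sum_(i < n.+1) v i * t ^+ (n - i).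
  rewrite -[t ^+ n]mul1r {1}Hv -mulrA mulr_suml; congr (z * _); apply: eq_bigr => i _.
  have iN : (i <= n)%N by rewrite -ltnS.
  have e2 : t ^+ n = t ^+ (n - i) * t ^+ i by rewrite -exprD subnK.
  by rewrite -mulrA e2 exprVn [t ^- i * _]mulrCA mulVf ?mulr1 // expf_neq0.
rewrite big_ord_recl /= subn0 in H1.
set S := \sum_(i < n) _ in H1.
set w := (1 - z * v 0%N)^-1.
have Bw : B w by apply: local_prop.
have w0 : 1 - z * v 0%N != 0.
  apply/eqP => e; apply: nB; move/eqP: e; rewrite subr_eq0 => /eqP e.
  by rewrite -[z^-1]mulr1 e mulKf.
have H3 : (1 - z * v 0%N) * t ^+ n = z * S.
  by rewrite mulrBl mul1r {1}H1 mulrDr mulrA addrAC subrr add0r.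
have H2 : t ^+ n = z * \sum_(k < n) (w * v (n - k)%N) * t ^+ k.
  rewrite -[t ^+ n](mulKf w0) H3 -/w mulrCA; congr (z * _).
  rewrite /S mulr_sumr (reindex_inj rev_ord_inj) /=; apply: eq_bigr => i _.
  have iN : (i < n)%N by [].
  have e3 : bump 0 (n - i.+1) = (n - i)%N by rewrite /bump /= add1n subnSK.
  by rewrite e3 (subKn (ltnW iN)) mulrA.
clear H1 H3.
move: H2 nd Bu Hu; case En: n => [|n'] H2 nd Bu Hu.
  by exfalso; move: H2; rewrite big_ord0 mulr0 expr0 => /eqP; rewrite oner_eq0.
have Hspan := @span _ _ _ _ _ (fun k => w * v (n'.+1 - k)%N) SB Bz (fun k => srM SB Bw (Bv _)) H2.
rewrite -En in nd Hspan *.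
have [f Hf] := choice_fun Hspan.
set m1 := (d1 - n)%N.
exists (fun l => u l + z * \sum_(k < m1) u (n + k)%N * f k l); split.
  move=> l; apply: (srD SB) => //; apply: (srM SB) => //.
  by apply: sr_sum => // k _; apply: (srM SB) => //; case: (Hf k) => Hb _.
rewrite Hu.
have -> : \sum_(i < d1) u i * t ^+ i = \sum_(i < n + m1) u i * t ^+ i.
  by rewrite /m1 subnKC // ltnW.
rewrite big_split_ord /=; congr (z * _).
have -> : \sum_(l < n) (u l + z * \sum_(k < m1) u (n + k)%N * f k l) * t ^+ l =
   \sum_(l < n) u l * t ^+ l + \sum_(l < n) (z * \sum_(k < m1) u (n + k)%N * f k l) * t ^+ l.
  by rewrite -big_split; apply: eq_bigr => l _; rewrite mulrDl.
congr (_ + _).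
have -> : \sum_(l < n) (z * \sum_(k < m1) u (n + k)%N * f k l) * t ^+ l =
   \sum_(l < n) \sum_(k < m1) z * u (n + k)%N * f k l * t ^+ l.
  apply: eq_bigr => l _; rewrite mulr_sumr mulr_suml; apply: eq_bigr => k _.
  by rewrite !mulrA.
rewrite exchange_big /=; apply: eq_bigr => k _.
have [_ ->] := Hf k; rewrite !mulr_sumr; apply: eq_bigr => i _.
by rewrite !mulrA [u _ * z]mulrC.
Qed.

Lemma no_both (K : fieldType) (B : K -> Prop) z : maxring B z ->
  forall N t d1 d2, t != 0 -> (d1 + d2 <= N)%N -> Erep B z t d1 -> Erep B z t^-1 d2 -> False.
Proof.
move=> MB; elim => [|N IH] t d1 d2 t0 hN E1 E2.
  have d10 : d1 = 0%N by lia.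
  by rewrite d10 in E1; apply: Erep0 E1.
case: (leqP d2 d1) => h.
  case: d2 E2 h hN => [|n] E2 h hN; first by apply: Erep0 E2.
  have E1' := reduce MB t0 E2 E1 h.
  by apply: (IH t n n.+1 t0 _ E1' E2); lia.
case: d1 E1 h hN => [|n] E1 h hN; first by apply: Erep0 E1.
have ti0 : t^-1 != 0 by rewrite invr_eq0.
have E1i : Erep B z (t^-1)^-1 n.+1 by rewrite invrK.
have E2' := reduce MB ti0 E1i E2 (ltnW h).
by apply: (IH t n.+1 n t0 _ E1 E2'); lia.
Qed.

Lemma maxring_val (K : fieldType) (B : K -> Prop) z : maxring B z -> valring B.
Proof.
move=> MB; have [SB [Bz [z0 [nB _]]]] := MB; split => // t t0.
case: (classic (gen B t z^-1)) => g1; last by left; apply: (adjoin MB).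
case: (classic (gen B t^-1 z^-1)) => g2; last by right; apply: (adjoin MB).
exfalso; have [d1 E1] := gen_E SB z0 g1; have [d2 E2] := gen_E SB z0 g2.
exact: (no_both MB (leqnn (d1 + d2)) t0 E1 E2) || exact: (@no_both _ _ _ MB (d1 + d2) t d1 d2 t0 (leqnn _) E1 E2).
Qed.

Lemma val_exists (K : fieldType) (R : K -> Prop) y :
  subring R -> integrally_closed R -> ~ R y ->
  exists V, valring V /\ (forall x, R x -> V x) /\ ~ V y.
Proof.
move=> SR IC nRy.
have y0 : y != 0 by apply/eqP => y0; apply: nRy; rewrite y0; apply: sr0.
set z := y^-1.
have z0 : z != 0 by rewrite invr_eq0.
have zy : z^-1 = y by rewrite invrK.
pose P := fun B : K -> Prop => (subring B /\ (forall x, gen R z x -> B x) /\ ~ B y) \/ (forall x, ~ B x).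
have P1 : forall B x, P B -> B x -> subring B /\ (forall x, gen R z x -> B x) /\ ~ B y.
  by move=> B x [//|H] Bx; case: (H x).
have Hch : forall F : (K -> Prop) -> Prop, (forall X, F X -> P X) ->
     (forall X Y, F X -> F Y -> (forall x, X x -> Y x) \/ (forall x, Y x -> X x)) ->
     P (fun x => exists X, F X /\ X x).
  move=> F FP Ftot.
  case: (classic (exists X x, F X /\ X x)) => [[X0 [x0 [FX0 X0x]]]|none]; last first.
    by right => x [X [FX Xx]]; apply: none; exists X, x.
  have [SX0 [GX0 nX0]] := P1 X0 x0 (FP X0 FX0) X0x.
  left; split.
    split; first by exists X0; split => //; apply: sr1.
    have key : forall a b, (exists X, F X /\ X a) -> (exists X, F X /\ X b) ->
        exists X, F X /\ subring X /\ X a /\ X b.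
      move=> a b [X1 [FX1 X1a]] [X2 [FX2 X2b]].
      case: (Ftot X1 X2 FX1 FX2) => h.
        exists X2; split => //; split; last by split => //; apply: h.
        by case: (P1 X2 b (FP X2 FX2) X2b).
      exists X1; split => //; split; last by split => //; apply: h.
      by case: (P1 X1 a (FP X1 FX1) X1a).
    split => a b Ha Hb; have [X [FX [SX [Xa Xb]]]] := key a b Ha Hb; exists X; split => //.
      exact: srB.
    exact: srM.
  split; first by move=> x gx; exists X0; split => //; apply: GX0.
  move=> [X [FX Xy]]; have [_ [_ nXy]] := P1 X y (FP X FX) Xy; exact: nXy.
have [A [PA Amax]] := my_zorn Hch.
have [SA [GA nAy]] : subring A /\ (forall x, gen R z x -> A x) /\ ~ A y.
  case: PA => // Aempty; exfalso.
  have PB0 : P (gen R z) by left; split; [exact: gen_sr|split => //; exact: notin_gen_inv].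
  have := Amax (gen R z) PB0 (fun x Ax => False_ind _ (Aempty x Ax)) 1 (sr1 (gen_sr R z)).
  exact: Aempty.
have MA : maxring A z.
  split => //; split; first by apply: GA; apply: gen_t.
  split => //; split; first by rewrite zy.
  move=> B' SB' AB' nB'; apply: Amax => //; left; split => //; split.
    by move=> x gx; apply: AB'; apply: GA.
  by rewrite -zy.
exists A; split; first exact: (maxring_val MA).
by split => // x Rx; apply: GA; apply: gen_B.
Qed.

Lemma core (K : fieldType) (D R : K -> Prop) (Y : seq K) :
  overring D R -> integrally_closed R -> (forall y, y \in Y -> ~ R y) ->
  exists R', overring D R' /\ semilocal R' /\ prufer R' /\
     (forall x, R x -> R' x) /\ (forall y, y \in Y -> ~ R' y).
Proof.
move=> [SR DR] IC HY.
have [Vf HVf] : exists Vf : nat -> K -> Prop, forall j, (j < size Y)%N ->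
    valring (Vf j) /\ (forall x, R x -> Vf j x) /\ ~ Vf j (nth 0 Y j).
  apply: (@choice_fun nat (K -> Prop) (fun j V => (j < size Y)%N ->
    valring V /\ (forall x, R x -> V x) /\ ~ V (nth 0 Y j))) => j.
  case: (ltnP j (size Y)) => jY; last by exists (fun _ => True).
  have [V HV] := val_exists SR IC (HY _ (mem_nth 0 jY)).
  by exists V.
pose W := fun j : nat => if j is j'.+1 then Vf j' else (fun _ : K => True).
pose js := iota 0 (size Y).+1.
have Wv : forall j, j \in js -> valring (W j).
  move=> [|j]; first by move=> _; split; [exact: srT|move=> x _; left].
  by rewrite mem_iota /= ltnS => jY; case: (HVf j jY).
have [SL PR] := @fin_inter K W js isT (iota_uniq _ _) Wv.
have SA : subring (fun x => forall j, j \in js -> W j x).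
  by apply: (@sr_inter K nat (fun j => j \in js)) => j jjs; case: (Wv j jjs).
have RA : forall x, R x -> forall j, j \in js -> W j x.
  move=> x Rx [|j] //; rewrite mem_iota /= ltnS => jY.
  by case: (HVf j jY) => _ [H _]; apply: H.
exists (fun x => forall j, j \in js -> W j x); split.
  by split => // x Dx; apply: RA; apply: DR.
split => //; split => //; split => // y yY Ay.
have iY : (index y Y < size Y)%N by rewrite index_mem.
have := Ay (index y Y).+1; rewrite mem_iota /= ltnS => /(_ iY).
by case: (HVf _ iY) => _ [_]; rewrite nth_index.
Qed.

Lemma dir2 (K : fieldType) (D R : K -> Prop) :
  overring D R -> integrally_closed R ->
  constructible_closure D (fun R' => overring D R' /\ semilocal R' /\ prufer R') R.
Proof.
move=> oR IC; split => // n U b HU HR.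
have Hdec : forall k, exists p : nat * (nat -> seq K), (k < n)%N ->
   (forall R', U k R' -> exists i, (i < p.1)%N /\ zbasic D (p.2 i) R') /\
   (forall i, (i < p.1)%N -> forall R', zbasic D (p.2 i) R' -> U k R').
  move=> k; case: (ltnP k n) => kn; last by exists (0%N, fun _ => [::]).
  have [[UO1 UO2] Uqc] := HU k kn.
  pose I := {F : seq K | forall R', zbasic D F R' -> U k R'}.
  have Vop : forall F : I, zopen D (zbasic D (proj1_sig F)).
    move=> F; split; first by move=> T [].
    by move=> T HT; exists (proj1_sig F).
  have cov : forall R', U k R' -> exists F : I, zbasic D (proj1_sig F) R'.
    by move=> R' UR'; have [F [HF1 HF2]] := UO2 R' UR'; exists (exist _ F HF2).
  have [m [f Hf]] := Uqc I (fun F => zbasic D (proj1_sig F)) Vop cov.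
  exists (m, fun i => proj1_sig (f i)) => _; split => //=.
  by move=> i im R' HR'; exact: (proj2_sig (f i)) R' HR'.
have [dec Hd] := choice_fun Hdec.
have Hy : forall p : nat * nat, exists y : K,
    ((p.1 < n)%N /\ b p.1 = false /\ (p.2 < (dec p.1).1)%N) ->
    y \in (dec p.1).2 p.2 /\ ~ R y.
  move=> [k i] /=.
  case: (classic ((k < n)%N /\ b k = false /\ (i < (dec k).1)%N)) => [[kn [bk im]]|h]; last first.
    by exists 0.
  have nzb : ~ zbasic D ((dec k).2 i) R.
    move=> zb; have := (Hd k kn).2 i im R zb; move/(HR k kn); by rewrite bk.
  apply: NNPP => ne; apply: nzb; split => // x xG; apply: NNPP => nRx; apply: ne.
  by exists x => _; split.
have [yf Hyf] := choice_fun Hy.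
set ks := [seq k <- iota 0 n | ~~ b k].
set Y := [seq yf (k, i) | k <- ks, i <- iota 0 (dec k).1].
have YR : forall y, y \in Y -> ~ R y.
  move=> y /allpairsPdep [k [i [kks iin ->]]].
  move: kks iin; rewrite mem_filter !mem_iota /= => /andP [bk kn] im.
  by have [] := Hyf (k, i) (conj kn (conj (negbTE bk) im)).
have [R' [oR' [sl [pr [RR' YR']]]]] := core oR IC YR.
exists R'; split => //; split => //; move=> k kn; split.
  move=> UR'; case bk: (b k) => //; exfalso.
  have [i [im zb]] := (Hd k kn).1 R' UR'.
  have [yin nRy] := Hyf (k, i) (conj kn (conj bk im)).
  apply: (YR' (yf (k, i))).
    by apply: allpairs_f_dep; [rewrite mem_filter bk mem_iota /= kn|rewrite mem_iota /= im].
  by apply: zb.2.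
move=> bk; have UR := (HR k kn).2 bk.
have [F [[_ FR] HF]] := (HU k kn).1.2 R UR.
by apply: HF; split => // x xF; apply: RR'; apply: FR.
Qed.

Unset Implicit Arguments.
Theorem proposition6p1 (K : fieldType) (D : K -> Prop) :
  subring D -> quotient_field_of D ->
  forall R : K -> Prop,
    constructible_closure D
      (fun R' => overring D R' /\ semilocal R' /\ prufer R') R
    <-> (overring D R /\ integrally_closed R).
Proof.
move=> SD QF R; split; first exact: dir1.
by move=> [oR IC]; apply: dir2.
Qed.
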